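(* Let $q\ge2$ and $n\ge1$. Every $2$-read $(n,5)_q$-code $\mathcal{C}\subseteq\Sigma_q^n$ satisfies $r(\mathcal{C})\ge\log_q((q-1)n+1)$.
   Context: $\Sigma_q=\{0,\dots,q-1\}$. For $\boldsymbol{x}\in\Sigma_q^n$, $x[i]$ is its $i$-th entry, with $x[i]=0$ for $i\notin[1,n]$; $\mathcal{R}(\boldsymbol{x})$ is the length-$(n+1)$ vector whose $i$-th entry is the multiset $\{\{x[i-1],x[i]\}\}$. $\mathcal{C}\subseteq\Sigma_q^n$ is a $2$-read $(n,d)_q$-code if $d_H(\mathcal{R}(\boldsymbol{x}),\mathcal{R}(\boldsymbol{y}))\ge d$ for all distinct $\boldsymbol{x},\boldsymbol{y}\in\mathcal{C}$ ($d_H$ = Hamming distance). Redundancy: $r(\mathcal{C})=n-\log_q|\mathcal{C}|$. *)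

(* Defs.v *)
From mathcomp Require Import all_boot.
From Stdlib Require Import Reals.
Set Implicit Arguments. Unset Strict Implicit. Unset Printing Implicit Defensive.

(* Words x in Sigma_q^n are n-tuples over 'I_q (values as nats).
   entry x i = x[i] (1-indexed), with x[i] = 0 for i outside [1,n]. *)
Definition entry (q n : nat) (x : n.-tuple 'I_q) (i : nat) : nat :=
  if (1 <= i <= n) then nth 0 (map (@nat_of_ord q) x) i.-1 else 0.

(* The multiset {{a,b}} is represented canonically as the sorted pair
   (min a b, max a b): two 2-multisets are equal iff these pairs are equal. *)
Definition mset2 (a b : nat) : nat * nat := (minn a b, maxn a b).

(* R(x): the length-(n+1) vector whose i-th entry (i = 1..n+1) is
   {{x[i-1], x[i]}}. Stored 0-indexed: position k holds entry i = k+1. *)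
Definition read2 (q n : nat) (x : n.-tuple 'I_q) : seq (nat * nat) :=
  [seq mset2 (entry x i.-1) (entry x i) | i <- iota 1 n.+1].

Definition hamming (T : eqType) (s t : seq T) : nat :=
  count (fun p => p.1 != p.2) (zip s t).

Definition two_read_code (q n d : nat) (C : {set n.-tuple 'I_q}) : Prop :=
  forall x y, x \in C -> y \in C -> x != y -> d <= hamming (read2 x) (read2 y).

Definition logb (q : nat) (x : R) : R := (ln x / ln (INR q))%R.

Definition redundancy (q n : nat) (C : {set n.-tuple 'I_q}) : R :=
  (INR n - logb q (INR #|C|))%R.

(* Main.v *)
Require Import Defs.
From mathcomp Require Import all_boot.
From Stdlib Require Import Reals Lra.
Set Implicit Arguments. Unset Strict Implicit. Unset Printing Implicit Defensive.

Lemma big_opt (J : finType) (F : option J -> nat) : \sum_o F o = F None + \sum_j F (Some j).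
Proof.
transitivity (\sum_(o <- None :: map Some (index_enum J)) F o); last by rewrite big_cons big_map.
apply: perm_big; apply: uniq_perm.
- exact: index_enum_uniq.
- rewrite /= map_inj_uniq ?index_enum_uniq ?andbT; last by move=> a b [].
  by apply/mapP => -[].
- by case=> [a|]; rewrite mem_index_enum ?inE //= (mem_map (@Some_inj _)) mem_index_enum.
Qed.

Section S.
Variables q n : nat.
Implicit Types x y z : n.-tuple 'I_q.

Definition dH x y := #|[set i : 'I_n | tnth x i != tnth y i]|.

Lemma entryE x (i : 'I_n) : entry x i.+1 = tnth x i.
Proof.
rewrite /entry /= ltn_ord (nth_map (tnth x i)) ?size_tuple //.
by rewrite -tnth_nth.
Qed.

Lemma entry0 x : entry x 0 = 0. Proof. by []. Qed.
Lemma entryn x : entry x n.+1 = 0. Proof. by rewrite /entry ltnn andbF. Qed.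

Definition A x y j := entry x j != entry y j.

Lemma dH_count x y : count (A x y) (iota 1 n) = dH x y.
Proof.
rewrite /dH -sum1_card -sum1_count.
rewrite -(addn0 1) iotaDl big_map addn0.
have -> : iota 0 n = index_iota 0 n by rewrite /index_iota subn0.
rewrite big_mkcond big_mkord.
rewrite [RHS]big_mkcond /=; apply: eq_bigr => i _.
rewrite inE /A add1n !entryE. by [].
Qed.

Lemma read_le x y : hamming (read2 x) (read2 y) <= 2 * dH x y.
Proof.
rewrite /hamming /read2 zip_map count_map.
apply: (@leq_trans (count (predU (fun i => A x y i.-1) (A x y)) (iota 1 n.+1))).
  apply: sub_count => i /=; rewrite /A /mset2.
  by case: (entry x i.-1 =P entry y i.-1) => [->|]//; case: (entry x i =P entry y i) => [->|] //; rewrite eqxx.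
apply: (@leq_trans (count (fun i => A x y i.-1) (iota 1 n.+1) + count (A x y) (iota 1 n.+1))).
  by rewrite -count_predUI leq_addr.
have h1 : count (fun i => A x y i.-1) (iota 1 n.+1) = count (A x y) (iota 1 n).
  rewrite -(addn0 1) iotaDl count_map addn0 /=.
  rewrite (@eq_count _ _ (A x y)); last by move=> j /=; rewrite ?add1n.
  by [].
have h2 : count (A x y) (iota 1 n.+1) = count (A x y) (iota 1 n).
  by rewrite -[n.+1]addn1 iotaD count_cat /= /A add1n !entryn eqxx !addn0.
by rewrite h2 h1 dH_count addnn mul2n.
Qed.

Definition subst x (o : option ('I_n * 'I_q)) : n.-tuple 'I_q :=
  if o is Some p then [tuple (if j == p.1 then p.2 else tnth x j) | j < n] else x.

Definition valid x (o : option ('I_n * 'I_q)) :=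
  if o is Some p then p.2 != tnth x p.1 else true.

Lemma dH_sym x y : dH x y = dH y x.
Proof. by rewrite /dH; apply: eq_card => i; rewrite !inE eq_sym. Qed.

Lemma dH_tri x y z : dH x y <= dH x z + dH z y.
Proof.
rewrite /dH; apply: leq_trans (leq_card_setU _ _).
apply: subset_leq_card; apply/subsetP => i; rewrite !inE.
by case: (tnth x i =P tnth z i) => [->|] //; rewrite orbT.
Qed.

Lemma dH_subst x o : dH x (subst x o) <= 1.
Proof.
case: o => [[i v]|] /=; last first.
  rewrite /dH (_ : [set _ | _] = set0) ?cards0 //.
  by apply/setP => j; rewrite !inE eqxx.
rewrite /dH -(cards1 i); apply: subset_leq_card; apply/subsetP => j.
by rewrite !inE tnth_mktuple; case: (j =P i) => // _; rewrite eqxx.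
Qed.

Lemma subst_inj (C : {set n.-tuple 'I_q}) : two_read_code 5 C ->
  {in [set p | (p.1 \in C) && valid p.1 p.2] &, injective (fun p => subst p.1 p.2)}.
Proof.
move=> hC [x o] [y o']; rewrite !inE /= => /andP[xC vo] /andP[yC vo'] e.
have exy : x = y.
  apply/eqP; apply/negPn/negP => nxy.
  have := hC _ _ xC yC nxy.
  have h1 := read_le x y.
  have h2 := dH_tri x y (subst x o).
  have h3 := dH_subst x o.
  have h4 := dH_subst y o'.
  rewrite -e dH_sym in h4.
  move=> h5.
  have : 5 <= 4 by apply: (leq_trans h5); apply: (leq_trans h1);
     rewrite -[4]/(2*2) leq_mul2l /=; apply: (leq_trans h2); exact: (leq_add h3 h4).
  by [].
subst y; congr pair.
case: o o' vo vo' e => [[i v]|] [[i' v']|] //= vo vo'.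
- move/(congr1 (fun t => tnth t i)); rewrite !tnth_mktuple eqxx.
  case: (i =P i') => [ei|ne]; last by move=> ev; rewrite ev eqxx in vo.
  by subst i'; move=> ->.
- move/(congr1 (fun t => tnth t i)); rewrite !tnth_mktuple eqxx => ev.
  by rewrite ev eqxx in vo.
- move/(congr1 (fun t => tnth t i')); rewrite !tnth_mktuple eqxx => ev.
  by rewrite -ev eqxx in vo'.
Qed.


Lemma card_valid x : \sum_(o | valid x o) 1 = (q - 1) * n + 1.
Proof.
rewrite big_mkcond big_opt /= addnC; congr (_ + _).
rewrite -big_mkcond /= -(pair_big_dep predT (fun i v => v != tnth x i) (fun _ _ => 1)) /=.
rewrite (eq_bigr (fun _ => q - 1)); first by rewrite sum_nat_const card_ord mulnC.
move=> i _.
rewrite sum1dep_card (_ : [set v | v != tnth x i] = [set~ tnth x i]) ?cardsC1 ?card_ord ?subn1 //.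
by apply/setP => v; rewrite !inE.
Qed.

Lemma card_T (C : {set n.-tuple 'I_q}) :
  #|[set p | (p.1 \in C) && valid p.1 p.2]| = #|C| * ((q - 1) * n + 1).
Proof.
rewrite -sum1dep_card -(pair_big_dep (fun x => x \in C) (fun x o => valid x o) (fun _ _ => 1)) /=.
by rewrite (eq_bigr (fun _ => (q - 1) * n + 1)) ?sum_nat_const // => x _; rewrite card_valid.
Qed.

Lemma packing (C : {set n.-tuple 'I_q}) : two_read_code 5 C ->
  #|C| * ((q - 1) * n + 1) <= expn q n.
Proof.
move=> hC; rewrite -card_T -(card_in_imset (subst_inj hC)).
apply: (leq_trans (max_card _)). by rewrite card_tuple card_ord.
Qed.

End S.

Theorem theorem11 (q n : nat) (C : {set n.-tuple 'I_q}) :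
  2 <= q -> 1 <= n -> 0 < #|C| -> two_read_code 5 C ->
  (redundancy C >= logb q (INR ((q - 1) * n + 1)))%R.
Proof.
move=> hq hn hC hcode.
have hp := packing hcode.
set c := #|C| in hC hp *; set m := (q - 1) * n + 1 in hp *.
have cpos : (0 < INR c)%R by apply: lt_0_INR; apply/ltP.
have mpos : (0 < INR m)%R by apply: lt_0_INR; rewrite /m addn1; apply/ltP.
have Qgt1 : (1 < INR q)%R by rewrite -[1%R]/(INR 1); apply: lt_INR; apply/ltP.
have Qpos : (0 < INR q)%R by lra.
have L : (0 < ln (INR q))%R by rewrite -ln_1; apply: ln_increasing; lra.
have hle : (INR c * INR m <= INR q ^ n)%R.
  have pw : forall k, INR (expn q k) = (INR q ^ k)%R.
    by elim => [|k IH] //=; rewrite expnS mulnE mult_INR IH.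
  rewrite -pw -mult_INR -mulnE; apply: le_INR; apply/leP; exact: hp.
have hln : (ln (INR c) + ln (INR m) <= INR n * ln (INR q))%R.
  rewrite -ln_mult // -ln_pow //.
  case: (Rle_lt_or_eq_dec _ _ hle) => [h|->]; last lra.
  by apply: Rlt_le; apply: ln_increasing => //; apply: Rmult_lt_0_compat.
rewrite /redundancy /logb; apply: Rle_ge.
have e : (INR n = INR n * ln (INR q) / ln (INR q))%R by field; lra.
rewrite e.
have : (ln (INR m) / ln (INR q) + ln (INR c) / ln (INR q) <= INR n * ln (INR q) / ln (INR q))%R.
  rewrite /Rdiv -Rmult_plus_distr_r; apply: Rmult_le_compat_r; last lra.
  by apply: Rlt_le; apply: Rinv_0_lt_compat.
rewrite -/c; lra.
Qed.
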